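(* Let $f\in\mathbb{Z}_2[x]$, $n\ge2$, and let $\sigma$ be a cycle of $f_n$. If $\sigma$ strongly grows, then its (unique) lift strongly grows. If $\sigma$ weakly grows, then its lift strongly splits.
   Context: $f_n$ is the induced map on $\mathbb{Z}/2^n\mathbb{Z}$, $f_n(x\bmod 2^n)=f(x)\bmod 2^n$. A $k$-cycle of $f_n$ is a tuple $\sigma=(x_1,\dots,x_k)$ of distinct elements with $f_n(x_i)=x_{i+1}$, $f_n(x_k)=x_1$; its lifts are the cycles of $f_{n+1}$ in $\{y\in\mathbb{Z}/2^{n+1}\mathbb{Z}:y\bmod 2^n\in\sigma\}$. For $x\in\mathbb{Z}_2$ set $a_n(x)=(f^k)'(x)$ and $b_n(x)=(f^k(x)-x)/2^n$, evaluated at a representative $x\in\mathbb{Z}_2$ of a point of $\sigma$ (for lifts at level $n+1$ of length $k'$ use $a_{n+1}(x)=(f^{k'})'(x)$, $b_{n+1}(x)=(f^{k'}(x)-x)/2^{n+1}$). $\sigma$ strongly grows if $a_n\equiv1\pmod4$ and $b_n\equiv1\pmod2$; weakly grows if $a_n\equiv3\pmod4$ and $b_n\equiv1\pmod2$; strongly splits if $a_n\equiv1\pmod4$ and $b_n\equiv0\pmod2$; weakly splits if $a_n\equiv3\pmod4$ and $b_n\equiv0\pmod2$ (these conditions do not depend on the chosen representative). *)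

(* Defs.v *)
From HB Require Import structures.
From mathcomp Require Import all_boot all_order all_algebra.
From mathcomp Require Import boolp.
From Stdlib Require Import FunctionalExtensionality ProofIrrelevance.

Set Implicit Arguments.
Unset Strict Implicit.
Unset Printing Implicit Defensive.

Import Order.TTheory GRing.Theory Num.Theory.
Local Open Scope ring_scope.

(* The ring Z_2 of 2-adic integers, as the inverse limit of the Z/2^n Z:    *)
(* an element is a sequence of residues x_n in [0, 2^n) (stored as ints)    *)

Definition pow2 (n : nat) : int := 2%:Z ^+ n.

Lemma pow2_gt0 n : 0 < pow2 n.
Proof. by rewrite /pow2 exprn_gt0. Qed.

Lemma pow2_neq0 n : pow2 n != 0.
Proof. by rewrite gt_eqF // pow2_gt0. Qed.

Record Z2 := MkZ2 {
  z2seq : nat -> int ;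
  z2coh : forall n, z2seq n = modz (z2seq n.+1) (pow2 n) }.

HB.instance Definition _ := gen_eqMixin Z2.
HB.instance Definition _ := gen_choiceMixin Z2.

Lemma Z2_ext (x y : Z2) : (forall n, z2seq x n = z2seq y n) -> x = y.
Proof.
case: x => sx hx; case: y => sy hy /= E.
have Es : sx = sy by apply: functional_extensionality.
subst sy; f_equal; apply: proof_irrelevance.
Qed.

Lemma modz_pow2S (a : int) n : modz (modz a (pow2 n.+1)) (pow2 n) = modz a (pow2 n).
Proof.
rewrite {2}(divz_eq a (pow2 n.+1)) /pow2 exprS mulrA.
by rewrite modzMDl.
Qed.

Definition compat (s : nat -> int) :=
  forall n, (s n.+1 = s n %[mod pow2 n])%Z.

Lemma mk_coh (s : nat -> int) (hs : compat s) n :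
  modz (s n) (pow2 n) = modz (modz (s n.+1) (pow2 n.+1)) (pow2 n).
Proof. by rewrite modz_pow2S hs. Qed.

Definition mkZ2 (s : nat -> int) (hs : compat s) : Z2 :=
  @MkZ2 (fun n => modz (s n) (pow2 n)) (mk_coh hs).

Lemma mkZ2E s hs n : z2seq (@mkZ2 s hs) n = modz (s n) (pow2 n).
Proof. by []. Qed.

Lemma z2mod (x : Z2) n : modz (z2seq x n) (pow2 n) = z2seq x n.
Proof. by rewrite [in RHS](z2coh x n) (z2coh x n) modz_mod. Qed.

Lemma compat_cst (c : int) : compat (fun=> c).
Proof. by []. Qed.

Lemma compat_add (x y : Z2) : compat (fun n => z2seq x n + z2seq y n).
Proof. by move=> n; rewrite (z2coh x n) (z2coh y n) modzDml modzDmr. Qed.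

Lemma compat_mul (x y : Z2) : compat (fun n => z2seq x n * z2seq y n).
Proof. by move=> n; rewrite (z2coh x n) (z2coh y n) modzMml modzMmr. Qed.

Lemma compat_opp (x : Z2) : compat (fun n => - z2seq x n).
Proof. by move=> n; rewrite (z2coh x n) modzNm. Qed.

Definition z2zero : Z2 := mkZ2 (compat_cst 0).
Definition z2one : Z2 := mkZ2 (compat_cst 1).
Definition z2add (x y : Z2) : Z2 := mkZ2 (compat_add x y).
Definition z2mul (x y : Z2) : Z2 := mkZ2 (compat_mul x y).
Definition z2opp (x : Z2) : Z2 := mkZ2 (compat_opp x).

Lemma z2addA : associative z2add.
Proof.
by move=> x y z; apply: Z2_ext => n; rewrite !mkZ2E modzDml modzDmr addrA.
Qed.

Lemma z2addC : commutative z2add.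
Proof. by move=> x y; apply: Z2_ext => n; rewrite !mkZ2E addrC. Qed.

Lemma z2add0 : left_id z2zero z2add.
Proof. by move=> x; apply: Z2_ext => n; rewrite !mkZ2E modzDml add0r z2mod. Qed.

Lemma z2addN : left_inverse z2zero z2opp z2add.
Proof. by move=> x; apply: Z2_ext => n; rewrite !mkZ2E modzDml addNr. Qed.

HB.instance Definition _ := GRing.isZmodule.Build Z2 z2addA z2addC z2add0 z2addN.

Lemma z2mulA : associative z2mul.
Proof.
by move=> x y z; apply: Z2_ext => n; rewrite !mkZ2E modzMml modzMmr mulrA.
Qed.

Lemma z2mulC : commutative z2mul.
Proof. by move=> x y; apply: Z2_ext => n; rewrite !mkZ2E mulrC. Qed.

Lemma z2mul1 : left_id z2one z2mul.
Proof. by move=> x; apply: Z2_ext => n; rewrite !mkZ2E modzMml mul1r z2mod. Qed.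

Lemma z2mulDl : left_distributive z2mul (@GRing.add Z2).
Proof.
move=> x y z; apply: Z2_ext => n.
change (z2seq (z2mul (z2add x y) z) n =
        z2seq (z2add (z2mul x z) (z2mul y z)) n).
by rewrite !mkZ2E modzMml mulrDl modzDml modzDmr.
Qed.

Lemma z2one_neq0 : z2one != (0 : Z2).
Proof.
apply/eqP => H; have := f_equal (fun x => z2seq x 1) H.
by change (modz 1 (pow2 1) = modz 0 (pow2 1) -> False).
Qed.

HB.instance Definition _ :=
  GRing.Zmodule_isComNzRing.Build Z2 z2mulA z2mulC z2mul1 z2mulDl z2one_neq0.

Definition red (n : nat) (x : Z2) : int := z2seq x n.

(* Residues mod 2^n are represented by integers r with 0 <= r < 2^n.        *)

Definition fiter (f : {poly Z2}) (k : nat) : {poly Z2} :=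
  iter k (fun g => f \Po g) 'X.

(* f_n (r mod 2^n) = f(r) mod 2^n, using the representative r%:~R of r *)
Definition fn (f : {poly Z2}) (n : nat) (r : int) : int := red n f.[r%:~R].

Definition is_cycle (f : {poly Z2}) (n : nat) (s : seq int) : bool :=
  [&& s != [::], uniq s, all (fun r => (0 <= r) && (r < pow2 n)) s
    & fcycle (fn f n) s].

Definition is_lift (f : {poly Z2}) (n : nat) (s t : seq int) : bool :=
  is_cycle f n.+1 t && all (fun y => modz y (pow2 n) \in s) t.

(* sigma has a unique lift (unique as a cycle: any two lifts consist of the
   same points, i.e. are rotations of each other) *)
Definition unique_lift (f : {poly Z2}) (n : nat) (s : seq int) : Prop :=
  (exists t, is_lift f n s t) /\
  (forall t t', is_lift f n s t -> is_lift f n s t' -> perm_eq t t').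

(* a_n(x) = (f^k)'(x) and b_n(x) = (f^k(x) - x)/2^n at the representative
   x = x_1 of the first point of sigma (k = size sigma);
   cycle_type f n s A B  <->  a_n = A (mod 4) and b_n = B (mod 2). *)
Definition cycle_type (f : {poly Z2}) (n : nat) (s : seq int) (A B : int)
    : Prop :=
  let x : Z2 := (head 0 s)%:~R in
  let P := fiter f (size s) in
  red 2 ((P^`()).[x]) = A /\
  exists b : Z2, (2%:R ^+ n) * b = P.[x] - x /\ red 1 b = B.

Definition strongly_grows f n s := cycle_type f n s 1 1.
Definition weakly_grows f n s := cycle_type f n s 3 1.
Definition strongly_splits f n s := cycle_type f n s 1 0.
Definition weakly_splits f n s := cycle_type f n s 3 0.

(* Main.v *)
Require Import Defs.
From HB Require Import structures.
From mathcomp Require Import all_boot all_order all_algebra.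
From mathcomp Require Import zify ring.
Set Implicit Arguments.
Unset Strict Implicit.
Unset Printing Implicit Defensive.
Import Order.TTheory GRing.Theory Num.Theory.
Local Open Scope ring_scope.

Lemma redD m (u v : Z2) : red m (u + v) = modz (red m u + red m v) (pow2 m).
Proof. by []. Qed.
Lemma redM m (u v : Z2) : red m (u * v) = modz (red m u * red m v) (pow2 m).
Proof. by []. Qed.
Lemma redN m (u : Z2) : red m (- u) = modz (- red m u) (pow2 m).
Proof. by []. Qed.
Lemma red1 m : red m 1 = modz 1 (pow2 m).
Proof. by []. Qed.
Lemma red0 m : red m 0 = 0.
Proof. by rewrite /red /= mod0z. Qed.
Lemma redmod m (u : Z2) : modz (red m u) (pow2 m) = red m u.
Proof. exact: z2mod. Qed.
Lemma red_ge0 m (u : Z2) : 0 <= red m u.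
Proof. by rewrite -redmod modz_ge0 // pow2_neq0. Qed.
Lemma red_lt m (u : Z2) : red m u < pow2 m.
Proof. by rewrite -redmod ltz_pmod // pow2_gt0. Qed.

Lemma modz_mulmod (a p q : int) : modz (modz a (p * q)) q = modz a q.
Proof.
by rewrite {2}(divz_eq a (p * q)) mulrA modzMDl.
Qed.

Lemma red_coh m j (u : Z2) : modz (red (j + m) u) (pow2 m) = red m u.
Proof.
elim: j => [|j IH]; first by rewrite add0n redmod.
rewrite -IH addSn /red (z2coh u (j + m)).
by rewrite /pow2 exprD modz_mulmod.
Qed.

Lemma red_nat m (k : nat) : red m (k%:R) = modz k (pow2 m).
Proof.
elim: k => [|k IH]; first by rewrite red0 mod0z.
by rewrite -addn1 natrD redD IH red1 modzDm -PoszD.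
Qed.

Lemma red_int m (r : int) : red m (r%:~R) = modz r (pow2 m).
Proof.
case: r => k; first exact: red_nat.
rewrite NegzE mulrNz redN.
have -> : (k.+1%:Z)%:~R = (k.+1)%:R :> Z2 by [].
by rewrite red_nat modzNm.
Qed.

Lemma two_pow_int m : (2%:R : Z2) ^+ m = (pow2 m)%:~R.
Proof. by rewrite /pow2 rmorphXn. Qed.

Lemma red_pow2 j m : red j ((2%:R : Z2) ^+ m) = modz (pow2 m) (pow2 j).
Proof. by rewrite two_pow_int red_int. Qed.

Lemma pow2D a b : pow2 (a + b) = pow2 a * pow2 b.
Proof. by rewrite /pow2 exprD. Qed.

Lemma red_div m (u : Z2) : red m u = 0 -> exists w : Z2, u = (2%:R ^+ m) * w.
Proof.
move=> H0.
pose W j := divz (red (j + m) u) (pow2 m).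
have HW j : W j * pow2 m = red (j + m) u.
  rewrite /W divzK //; apply/dvdz_mod0P; by rewrite red_coh.
have cW : compat W.
  move=> j.
  have E : W j = modz (W j.+1) (pow2 j).
    apply: (mulIf (pow2_neq0 m)).
    rewrite HW mulz_modl ?pow2_gt0 // HW -pow2D.
    by rewrite /red addSn (z2coh u (j + m)).
  by rewrite E modz_mod.
exists (mkZ2 cW); apply: Z2_ext => j.
change (red j u = red j ((2%:R ^+ m) * mkZ2 cW)).
rewrite redM red_pow2 /red mkZ2E -/(red j _).
rewrite modzMm mulrC HW addnC.
by rewrite -(red_coh j m u).
Qed.

Lemma red_mul_pow2 m (w : Z2) : red m ((2%:R ^+ m) * w) = 0.
Proof.
by rewrite redM red_pow2 modzz mul0r mod0z.
Qed.

Lemma red_eq_div m (u v : Z2) : red m u = red m v ->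
  exists w : Z2, u = v + (2%:R ^+ m) * w.
Proof.
move=> E; have [w Hw] : exists w : Z2, u - v = (2%:R ^+ m) * w.
  apply: red_div; rewrite redD redN E.
  by rewrite modzDmr subrr mod0z.
by exists w; rewrite -Hw addrC subrK.
Qed.

Lemma red_horner m (p : {poly Z2}) (u v : Z2) :
  red m u = red m v -> red m p.[u] = red m p.[v].
Proof.
move=> E; elim/poly_ind: p => [|p c IH]; first by rewrite !horner0.
rewrite !hornerMXaddC !redD !redM IH E //.
Qed.

Lemma taylor2 (p : {poly Z2}) (u h : Z2) :
  exists c, p.[u + h] = p.[u] + h * p^`().[u] + h ^+ 2 * c.
Proof.
elim/poly_ind: p => [|p a [c IH]].
  by exists 0; rewrite deriv0 !horner0; ring.
exists (p^`().[u] + c * (u + h)).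
rewrite derivMXaddC !hornerMXaddC hornerD hornerMX IH; ring.
Qed.

Lemma taylor1 (p : {poly Z2}) (u h : Z2) :
  exists c, p.[u + h] = p.[u] + h * c.
Proof.
have [c ->] := taylor2 p u h.
by exists (p^`().[u] + h * c); ring.
Qed.

Lemma fiter_iter f i q : iter i (fun g => f \Po g) q = fiter f i \Po q.
Proof.
elim: i => [|i IH] /=; first by rewrite comp_polyX.
by rewrite IH comp_polyA.
Qed.

Lemma fiterD f i j : fiter f (i + j) = fiter f i \Po fiter f j.
Proof. by rewrite /fiter iterD fiter_iter. Qed.

Lemma fiter1 f : fiter f 1 = f.
Proof. by rewrite /fiter /= comp_polyXr. Qed.

Lemma fiterS_eval f i x : (fiter f i.+1).[x] = f.[(fiter f i).[x]].
Proof. by rewrite -addn1 addnC fiterD fiter1 horner_comp. Qed.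

Lemma fiterS_eval' f i x : (fiter f i.+1).[x] = (fiter f i).[f.[x]].
Proof. by rewrite -addn1 fiterD fiter1 horner_comp. Qed.

Lemma fiter_comm_deriv f i x :
  (fiter f i)^`().[f.[x]] * f^`().[x] = f^`().[(fiter f i).[x]] * (fiter f i)^`().[x].
Proof.
have E1 : fiter f i.+1 = fiter f i \Po f by rewrite -addn1 fiterD fiter1.
have E2 : fiter f i.+1 = f \Po fiter f i by rewrite -addn1 addnC fiterD fiter1.
have := congr1 (fun p => (deriv p).[x]) (etrans (esym E1) E2).
by rewrite /= !deriv_comp !hornerM !horner_comp.
Qed.

Notation P m := ((2%:R : Z2) ^+ m).

Lemma pow2_1 : pow2 1 = 2. Proof. by []. Qed.
Lemma pow2_2 : pow2 2 = 4. Proof. by []. Qed.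

Lemma red_mul_pow2_le j m (w : Z2) : (j <= m)%N -> red j (P m * w) = 0.
Proof.
move=> le; rewrite -(subnKC le) exprD -mulrA; exact: red_mul_pow2.
Qed.

Lemma red_add0 j (x y : Z2) : red j y = 0 -> red j (x + y) = red j x.
Proof. by move=> H; rewrite redD H addr0 redmod. Qed.

Lemma red12 (u : Z2) : red 1 u = modz (red 2 u) 2.
Proof. by rewrite -pow2_1 -(red_coh 1 1). Qed.

Lemma red1_range (u : Z2) : red 1 u = 0 \/ red 1 u = 1.
Proof. have := red_ge0 1 u; have := red_lt 1 u; rewrite pow2_1; lia. Qed.

Lemma red2_range (u : Z2) : 0 <= red 2 u < 4.
Proof. have := red_ge0 2 u; have := red_lt 2 u; rewrite pow2_2; lia. Qed.

Lemma odd_split (a : Z2) : red 1 a = 1 -> exists a1, a = 1 + 2%:R * a1.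
Proof.
move=> H; have E : red 1 a = red 1 1 by rewrite H red1.
have [a1 ->] := red_eq_div E.
by exists a1; rewrite expr1.
Qed.

Lemma shift_rep m (g : {poly Z2}) u b h : (2 <= m)%N ->
  g.[u] = u + P m * b -> red 1 (g^`().[u]) = 1 ->
  exists b', g.[u + P m * h] = (u + P m * h) + P m * b' /\ red 1 b' = red 1 b
   /\ red 2 (g^`().[u + P m * h]) = red 2 (g^`().[u]).
Proof.
move=> m2 Hg Ha.
have [c Hc] := taylor2 g u (P m * h).
have [a1 Ha1] := odd_split Ha.
exists (b + 2%:R * (h * a1) + P m * (h ^+ 2 * c)); split.
  rewrite Hc Hg Ha1; ring.
split.
  rewrite red_add0; last by apply: red_mul_pow2_le; lia.
  rewrite red_add0 //; rewrite -[2%:R]expr1; exact: red_mul_pow2.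
have [c1 ->] := taylor1 (g^`()) u (P m * h).
by rewrite -mulrA red_add0 //; apply: red_mul_pow2_le.
Qed.

Lemma red1M (x y : Z2) : red 1 (x * y) = 1 -> red 1 y = 1.
Proof.
rewrite redM pow2_1 => H.
case: (red1_range y) => // H0; move: H; rewrite H0 mulr0 mod0z //.
Qed.

Lemma red1M1 (x y : Z2) : red 1 y = 1 -> red 1 (x * y) = red 1 x.
Proof.
move=> H; rewrite redM H mulr1 redmod //.
Qed.

Lemma shift_f m (f : {poly Z2}) k u b : (2 <= m)%N ->
  (fiter f k.+1).[u] = u + P m * b -> red 1 ((fiter f k.+1)^`().[u]) = 1 ->
  exists b', (fiter f k.+1).[f.[u]] = f.[u] + P m * b' /\ red 1 b' = red 1 b
   /\ red 2 ((fiter f k.+1)^`().[f.[u]]) = red 2 ((fiter f k.+1)^`().[u]).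
Proof.
move=> m2 Hg Ha.
set g := fiter f k.+1 in Hg Ha *.
have HF : red 1 (f^`().[u]) = 1.
  have E1 : g = fiter f k \Po f by rewrite /g -addn1 fiterD fiter1.
  move: Ha; rewrite E1 deriv_comp hornerM horner_comp; exact: red1M.
have [c Hc] := taylor2 f u (P m * b).
exists (b * f^`().[u] + P m * (b ^+ 2 * c)); split.
  rewrite -fiterS_eval' fiterS_eval -/g Hg Hc; ring.
split.
  rewrite red_add0; last by apply: red_mul_pow2_le; lia.
  by rewrite red1M1.
have E := fiter_comm_deriv f k.+1 u.
rewrite -/g Hg in E.
have [c1 Hc1] := taylor1 (f^`()) u (P m * b).
rewrite Hc1 in E.
have E2 : red 2 (g^`().[f.[u]] * f^`().[u]) = red 2 (f^`().[u] * g^`().[u]).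
  rewrite E mulrDl -!mulrA red_add0 //; by apply: red_mul_pow2_le.
move: E2; rewrite !redM pow2_2.
have := red12 (f^`().[u]); rewrite HF.
have := red2_range (f^`().[u]); have := red2_range (g^`().[u]);
have := red2_range (g^`().[f.[u]]).
set A' := red 2 _; set A := red 2 _; set F := red 2 _.
move=> r1 r2 r3 hF.
have [->|->] : F = 1 \/ F = 3 by lia.
  lia.
lia.
Qed.

Lemma lift_type n (g : {poly Z2}) y b : (2 <= n)%N ->
  g.[y] = y + P n * b -> red 1 b = 1 -> red 1 (g^`().[y]) = 1 ->
  exists b', (g \Po g).[y] = y + P n.+1 * b'
    /\ (red 2 (g^`().[y]) = 1 -> red 1 b' = 1)
    /\ (red 2 (g^`().[y]) = 3 -> red 1 b' = 0)
    /\ red 2 ((g \Po g)^`().[y]) = 1.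
Proof.
case: n => [//|n'] n2 Hg Hb Ha.
have [c Hc] := taylor2 g y (P n'.+1 * b).
have [a1 Ha1] := odd_split Ha.
have Hred : red 2 (g^`().[y]) = modz (1 + modz (2 * red 2 a1) 4) 4.
  by rewrite Ha1 redD redM red1 red_nat pow2_2.
have Hr1 : red 1 (1 + a1) = modz (1 + modz (red 2 a1) 2) 2.
  by rewrite redD red1 red12 pow2_1.
have := red2_range a1 => ra1.
exists (b * (1 + a1) + P n' * (b ^+ 2 * c)); split.
  rewrite horner_comp Hg Hc Hg Ha1 !exprS; ring.
have Hb' : red 1 (b * (1 + a1) + P n' * (b ^+ 2 * c)) = red 1 (1 + a1).
  rewrite red_add0; last by apply: red_mul_pow2_le; lia.
  by rewrite mulrC red1M1.
rewrite Hb' Hr1 Hred.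
split; first lia.
split; first lia.
rewrite deriv_comp hornerM horner_comp Hg.
have [c1 ->] := taylor1 (g^`()) y (P n'.+1 * b).
rewrite mulrDl -!mulrA red_add0; last by apply: red_mul_pow2_le.
rewrite redM pow2_2 Hred.
set X := modz (1 + _) 4.
have : X = 1 \/ X = 3 by rewrite /X; lia.
by case=> ->.
Qed.

Lemma red_Pm_succ m (b : Z2) : red m.+1 (P m * b) = pow2 m * red 1 b.
Proof.
rewrite redM red_pow2 (@modz_small (pow2 m)); last first.
  have := pow2_gt0 m; rewrite /pow2 exprS; set q := 2%:Z ^+ m; lia.
rewrite -(red_coh 1 m) addn1 mulz_modr ?pow2_gt0 //.
by rewrite -pow2D addn1.
Qed.

Lemma iter_red f m (x0 : int) i : 0 <= x0 < pow2 m ->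
  iter i (fn f m) x0 = red m ((fiter f i).[x0%:~R]).
Proof.
move=> hx; elim: i => [|i IH].
  by rewrite /= /fiter /= hornerX red_int modz_small.
rewrite iterS IH fiterS_eval /fn; apply: red_horner.
by rewrite red_int redmod.
Qed.

Lemma fn_range f m r : 0 <= fn f m r < pow2 m.
Proof. by rewrite /fn red_ge0 red_lt. Qed.

Lemma fn_red f n (x0 : int) i : 0 <= x0 < pow2 n ->
  modz (iter i (fn f n.+1) x0) (pow2 n) = iter i (fn f n) x0.
Proof.
move=> hx.
have hx' : 0 <= x0 < pow2 n.+1.
  case/andP: hx => h1 h2; rewrite h1 /=; apply: (lt_le_trans h2).
  by rewrite /pow2 exprS ler_peMl // ?exprn_ge0 // ler1n.
by rewrite !iter_red // -(red_coh n 1).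
Qed.

Lemma cyc_closed (T : eqType) (F : T -> T) (p : seq T) r :
  fcycle F p -> r \in p -> F r \in p.
Proof.
move=> hc hr; have := next_cycle hc hr => /eqP ->; by rewrite mem_next.
Qed.

Lemma cyc_iter (T : eqType) (F : T -> T) (p : seq T) r i :
  fcycle F p -> r \in p -> iter i F r \in p.
Proof.
move=> hc hr; elim: i => [//|i IH]; rewrite iterS; exact: cyc_closed.
Qed.

Lemma traject_cycle (T : eqType) (F : T -> T) x N :
  iter N.+1 F x = x -> fcycle F (traject F x N.+1).
Proof.
move=> Hx.
have E : rcons (traject F (F x) N) x = traject F (F x) N.+1.
  by rewrite trajectSr -iterSr Hx.
by rewrite /= E fpath_traject.
Qed.

Lemma traject_map T (F : T -> T) x N :
  traject F x N = [seq iter i F x | i <- iota 0 N].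
Proof.
elim: N x => [//|N IH] x.
rewrite /= IH -(addn0 1%N) iotaDl -map_comp.
congr (_ :: _); apply: eq_map => i /=; by rewrite add0n -iterS iterSr.
Qed.

Lemma traject_uniq (T : eqType) (F : T -> T) x N :
  (forall i j, (i < j < N)%N -> iter i F x != iter j F x) ->
  uniq (traject F x N).
Proof.
move=> H; rewrite traject_map map_inj_in_uniq ?iota_uniq //.
move=> i j; rewrite !mem_iota !add0n => hi hj E.
case: (ltngtP i j) => // hij.
  by move: (H i j); rewrite hij hj E eqxx => /(_ isT).
by move: (H j i); rewrite hij hi E eqxx => /(_ isT).
Qed.

Lemma two_cands (y u v p : int) : 0 < p -> 0 <= y < p * 2 -> 0 <= u < p * 2 ->
  0 <= v < p * 2 -> modz y p = modz u p -> modz v p = modz u p -> u != v ->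
  y = u \/ y = v.
Proof.
move=> p0 hy hu hv E1 E2 /eqP nuv.
have /dvdzP [c1 H1] : (p %| y - u)%Z by rewrite -eqz_mod_dvd E1.
have /dvdzP [c2 H2] : (p %| v - u)%Z by rewrite -eqz_mod_dvd E2.
have b1 : -2 < c1 < 2 by nia.
have b2 : -2 < c2 < 2 by nia.
have C1 : c1 = -1 \/ c1 = 0 \/ c1 = 1 by lia.
have C2 : c2 = -1 \/ c2 = 0 \/ c2 = 1 by lia.
case: C1 => [e1|[e1|e1]]; rewrite e1 in H1;
case: C2 => [e|[e|e]]; rewrite e in H2; lia.
Qed.

Lemma main_lemma f n s (A : int) :
  (2 <= n)%N -> is_cycle f n s -> (A = 1 \/ A = 3) ->
  cycle_type f n s A 1 ->
  unique_lift f n s /\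
  forall t, is_lift f n s t -> cycle_type f n.+1 t 1 (if A == 1 then 1 else 0).
Proof.
move=> n2 /and4P [sne su srange scyc] HA [Ha [b [Hb Hb1]]].
case: s sne su srange scyc Ha Hb => [//|x0 s'] _ su srange scyc Ha Hb.
set k := size (x0 :: s') in Ha Hb.
set h := fn f n in scyc *.
set H := fn f n.+1.
have x0r : 0 <= x0 < pow2 n by move: srange => /= /andP [].
have x0r' : 0 <= x0 < pow2 n.+1.
  case/andP: x0r => h1 h2; rewrite h1 /=; apply: (lt_le_trans h2).
  by rewrite /pow2 exprS ler_peMl // ?exprn_ge0 // ler1n.
have [Es Ek] : x0 :: s' = traject h x0 k /\ iter k h x0 = x0.
  move: scyc; rewrite /= => /fpathP [j Ej].
  have jk : j = k by move/(congr1 size): Ej; rewrite size_rcons size_traject.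
  subst j.
  have E2 : rcons (x0 :: s') x0 = rcons (traject h x0 k) (iter k h x0).
    rewrite -trajectSr; change (rcons (x0 :: s') x0 = x0 :: traject h (h x0) k).
    by rewrite -Ej.
  have E3 := congr1 fst (rcons_inj E2); have E4 := congr1 snd (rcons_inj E2). by split.
set g := fiter f k in Ha Hb.
set X : Z2 := (head 0 (x0 :: s'))%:~R in Ha Hb.
have HgX : g.[X] = X + P n * b by rewrite Hb addrC subrK.
have HaX1 : red 1 (g^`().[X]) = 1.
  by rewrite red12 Ha; case: HA => ->.
have F2 e : (0 < e < k)%N -> iter e h x0 != x0.
  move=> /andP [e0 ek].
  have U : uniq (traject h x0 k) by rewrite -Es.
  have k0 : (0 < k)%N by [].
  have := @nth_uniq _ x0 (traject h x0 k) 0 e; rewrite size_traject => /(_ k0 ek U).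
  rewrite !nth_traject // => E.
  by rewrite eq_sym -[x0]/(iter 0 h x0) E eq_sym -lt0n.
have F3 i : iter (i + k) h x0 = iter i h x0 by rewrite iterD Ek.
have F4 : iter k H x0 != x0.
  rewrite /H iter_red // -/g -/X HgX redD red_Pm_succ Hb1 mulr1 red_int.
  rewrite (modz_small x0r') modz_small.
    have := pow2_gt0 n; lia.
  have := pow2_gt0 n; move: x0r; rewrite /pow2 exprS; set q := 2%:Z ^+ n; lia.
have [b' [HL [HL1 [HL3 HLd]]]] := lift_type n2 HgX Hb1 HaX1.
have F5 : iter (k + k) H x0 = x0.
  rewrite /H iter_red // fiterD -/g HL red_add0 ?red_mul_pow2 //.
  by rewrite red_int modz_small.
have F7 i j : (i < j < k + k)%N -> iter i H x0 != iter j H x0.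
  move=> /andP [ij jkk]; apply/eqP => E.
  have Ed : iter (j - i) H x0 = x0.
    have E1 : iter (k + k - i + j) H x0 = iter (k + k - i + i) H x0
      by rewrite !iterD E.
    rewrite subnK in E1; last by lia.
    have e : (k + k - i + j = (j - i) + (k + k))%N by lia.
    by rewrite e iterD F5 in E1.
  have Edh : iter (j - i) h x0 = x0.
    by rewrite -fn_red // Ed modz_small.
  case: (ltngtP (j - i) k) => c.
  - move: (F2 (j - i)%N); rewrite Edh eqxx => F; have := F ltac:(lia); by [].
  - move: (F2 (j - i - k)%N); rewrite -F3 subnK; last by lia.
    by rewrite Edh eqxx => F; have := F ltac:(lia).
  - by move: F4; rewrite -c Ed eqxx.
have kk : (k + k = (size s' + k).+1)%N by rewrite /k /= addSn.
set t0 := traject H x0 (k + k).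
have t0u : uniq t0 by apply: traject_uniq.
have t0c : fcycle H t0 by rewrite /t0 kk traject_cycle // -kk.
have t0mem z : z \in t0 -> exists2 i, (i < k + k)%N & z = iter i H x0.
  by move/trajectP.
have iterH_range i : 0 <= iter i H x0 < pow2 n.+1.
  by rewrite /H iter_red // red_ge0 red_lt.
have t0lift : is_lift f n (x0 :: s') t0.
  apply/andP; split.
    apply/and4P; split => //; try (by rewrite /t0 kk).
    by apply/allP => z /t0mem [i _ ->].
  apply/allP => z /t0mem [i _ ->].
  rewrite fn_red //; apply: cyc_iter => //; exact: mem_head.
have sub1 t : is_lift f n (x0 :: s') t -> forall z, z \in t -> z \in t0.
  move=> /andP [/and4P [_ _ tr _] tm] z zt.
  have zr := allP tr z zt; have zm := allP tm z zt; rewrite /= in zr zm.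
  rewrite Es in zm; case/trajectP: zm => j jk Ez.
  have jkk : (j < k + k)%N by lia.
  have jkk' : (j + k < k + k)%N by lia.
  have [->|->] : z = iter j H x0 \/ z = iter (j + k) H x0.
    have Pn2 : pow2 n * 2 = pow2 n.+1 by rewrite /pow2 exprSr.
    apply: (@two_cands _ _ _ (pow2 n)); rewrite ?Pn2 ?pow2_gt0 ?iterH_range //.
    - by rewrite Ez fn_red.
    - by rewrite !fn_red // F3.
    - by apply: F7; rewrite jkk' andbT; lia.
  - by apply/trajectP; exists j.
  - by apply/trajectP; exists (j + k)%N.
have sub2 t : is_lift f n (x0 :: s') t -> forall z, z \in t0 -> z \in t.
  move=> tl z zt0.
  case: t tl => [|y0 t'] tl; first by move: tl => /andP [/and4P []].
  have tc : fcycle H (y0 :: t') by move: tl => /andP [/and4P []].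
  have [i ik Ey] := t0mem _ (sub1 _ tl y0 (mem_head _ _)).
  have [j jk ->] := t0mem _ zt0.
  have -> : iter j H x0 = iter (j + (k + k) - i) H y0.
    rewrite Ey -iterD subnK; last by lia.
    by rewrite iterD F5.
  apply: cyc_iter => //; exact: mem_head.
have perm t : is_lift f n (x0 :: s') t -> perm_eq t t0.
  move=> tl; apply: uniq_perm => //.
    by move: tl => /andP [/and4P []].
  by move=> z; apply/idP/idP; [apply: sub1 | apply: sub2].
split.
  split; first by exists t0.
  move=> t t' tl tl'; apply: (perm_trans (perm _ tl)); rewrite perm_sym; exact: perm.
move=> t tl.
have st : size t = (k + k)%N by rewrite (perm_size (perm t tl)) size_traject.
case: t tl st => [|y0 t'] tl st; first by move: tl => /andP [/and4P []].
have [i ik Ey] := t0mem _ (sub1 _ tl y0 (mem_head _ _)).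
have TR j : exists bj, g.[(fiter f j).[X]] = (fiter f j).[X] + P n * bj
    /\ red 1 bj = 1 /\ red 2 (g^`().[(fiter f j).[X]]) = A.
  elim: j => [|j [bj [E1 [E2 E3]]]].
    by exists b; rewrite /fiter /= hornerX.
  have HaJ : red 1 (g^`().[(fiter f j).[X]]) = 1.
    by rewrite red12 E3; case: HA => ->.
  have [bj' [G1 [G2 G3]]] := shift_f n2 E1 HaJ.
  by exists bj'; rewrite fiterS_eval G1 G2 G3 E2 E3.
have [bi [E1 [E2 E3]]] := TR i.
have [w Hw] : exists w : Z2, (y0%:~R : Z2) = (fiter f i).[X] + P n.+1 * w.
  apply: red_eq_div; rewrite red_int Ey /H iter_red // modz_small //.
  by rewrite red_ge0 red_lt.
have EY : (y0%:~R : Z2) = (fiter f i).[X] + P n * (2%:R * w).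
  rewrite Hw exprS; ring.
have HaI : red 1 (g^`().[(fiter f i).[X]]) = 1.
  by rewrite red12 E3; case: HA => ->.
have [b2 [G1 [G2 G3]]] := shift_rep (2%:R * w) n2 E1 HaI.
rewrite -EY in G1 G2 G3; rewrite E2 in G2; rewrite E3 in G3.
have HaY : red 1 (g^`().[y0%:~R]) = 1 by rewrite red12 G3; case: HA => ->.
have [b3 [K1 [K2 [K3 K4]]]] := lift_type n2 G1 G2 HaY.
rewrite /cycle_type st fiterD -/g; split => //.
exists b3; split; first by rewrite K1 addrC addKr.
case: HA G3 => -> G3.
  by rewrite eqxx K2.
by rewrite K3.
Qed.

Theorem proposition3p1 (f : {poly Z2}) (n : nat) (s : seq int) :
  (2 <= n)%N -> is_cycle f n s ->
  (strongly_grows f n s ->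
     unique_lift f n s /\
     forall t, is_lift f n s t -> strongly_grows f n.+1 t) /\
  (weakly_grows f n s ->
     unique_lift f n s /\
     forall t, is_lift f n s t -> strongly_splits f n.+1 t).
Proof.
move=> n2 hc; split => H.
  exact: (main_lemma n2 hc (or_introl erefl) H).
exact: (main_lemma n2 hc (or_intror erefl) H).
Qed.
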